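(* Let $\mathcal{G}'=(G';T_1',T_2';\theta')\in\mathcal{G}_2^{sym}$ with $\mathcal{G}'\neq\mathcal{K}_1$. Then there exists $\mathcal{G}=(G;T_1,T_2;\theta)\in\mathcal{G}_2^{sym}$ such that $\mathcal{G}'$ is obtained from $\mathcal{G}$ by either a symmetric $2$-tree $0$-extension or a symmetric $2$-tree $1$-extension.
   Context: A multi-graph is finite and loop-free, possibly with parallel edges. A $2$-tree decomposition is $(G;T_1,T_2)$ with $G$ a multi-graph and $T_1,T_2$ spanning trees of $G$ whose edge sets partition $E(G)$. Let $\mathbb{Z}_2=\langle s\rangle$. A $\mathbb{Z}_2$-symmetric multi-graph is a pair $(G,\theta)$ with $\theta:\mathbb{Z}_2\to\mathrm{Aut}(G)$ a non-trivial homomorphism; write $s_\theta=\theta(s)$ and for an edge $e=v_1v_2$, $s_\theta(e)=s_\theta(v_1)s_\theta(v_2)$. A vertex $v$ (edge $e$) is fixed if $s_\theta(v)=v$ ($s_\theta(e)=e$). A symmetric $2$-tree decomposition is $(G;T_1,T_2;\theta)$ where $(G;T_1,T_2)$ is a $2$-tree decomposition, $(G,\theta)$ is $\mathbb{Z}_2$-symmetric and $s_\theta(T_i)=T_i$ for $i=1,2$. $\mathcal{G}_2^{sym}$ denotes the set of symmetric $2$-tree decompositions with no fixed edges, together with $\mathcal{K}_1=(K_1;T_1,T_2;\theta)$ where $K_1$ is a single vertex, the $T_i$ are edgeless and $\theta$ is trivial. For $d\in\{1,2\}$: $(G',\theta')$ is obtained from $(G,\theta)$ by a symmetric $d$-dimensional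 $0$-extension if $V(G')=V(G)\cup\{v,s_{\theta'}(v)\}$ with $v,s_{\theta'}(v)\notin V(G)$ distinct, $s_{\theta'}|_{V(G)}=s_\theta$, and $E(G')=E(G)+\{vv_i,s_{\theta'}(vv_i):i=1,\dots,d\}$ for some not necessarily distinct $v_1,\dots,v_d\in V(G)$; it is obtained by a symmetric $d$-dimensional $1$-extension if the first two conditions hold and there are $v_1,\dots,v_{d+1}\in V(G)$ with $e=v_1v_2\in E(G)$ (otherwise not necessarily distinct) such that $E(G')=E(G)-\{e,s_\theta(e)\}+\{vv_i,s_{\theta'}(vv_i):i=1,\dots,d+1\}$. A symmetric $2$-tree decomposition $(G';T_1',T_2';\theta')$ is obtained from $(G;T_1,T_2;\theta)$ by a symmetric $2$-tree $j$-extension ($j\in\{0,1\}$) if $(G',\theta')$ is obtained from $(G,\theta)$ by a symmetric $2$-dimensional $j$-extension and, for $i=1,2$, $(T_i',\theta')$ is obtained from $(T_i,\theta)$ (with the restricted automorphisms) by a symmetric $1$-dimensional $k_i$-extension with the same new vertices, where $k_i\in\{0,1\}$ and $k_1+k_2=j$. *)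

(* Defs.v *)
From mathcomp Require Import all_boot.
Set Implicit Arguments.
Unset Strict Implicit.
Unset Printing Implicit Defensive.

(** A multigraph is given by a
  duplicate-free list of vertices and a MULTISET of edges, each edge being an
  unordered pair of distinct vertices.  An (unordered) edge {u,v} is stored as
  an ordered pair (u,v) or (v,u); [nrm] picks a canonical orientation, and
  multisets of edges are compared with [emeq] (permutation of the normalised
  lists).  Parallel edges = repeated entries. *)

Definition edge := (nat * nat)%type.

Definition nrm (e : edge) : edge :=
  if e.1 <= e.2 then (e.1, e.2) else (e.2, e.1).

Definition emeq (E F : seq edge) : Prop := perm_eq (map nrm E) (map nrm F).

Definition emap (s : nat -> nat) (e : edge) : edge := (s e.1, s e.2).

Definition mgraph (V : seq nat) (E : seq edge) : Prop :=
  uniq V /\ forall e, e \in E -> [/\ e.1 \in V, e.2 \in V & e.1 != e.2].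

Inductive reach (E : seq edge) : nat -> nat -> Prop :=
| reach_refl x : reach E x x
| reach_step x y z : ((x, y) \in E) || ((y, x) \in E) -> reach E y z ->
                     reach E x z.

Definition spanning_tree (V : seq nat) (T : seq edge) : Prop :=
  (forall x y, x \in V -> y \in V -> reach T x y) /\ size T = (size V).-1.

(** A candidate 2-tree decomposition together with the involution s = s_theta
    (only its values on the vertex set matter). *)
Record sym2tree := Sym2Tree {
  sV  : seq nat;
  sE  : seq edge;
  sT1 : seq edge;
  sT2 : seq edge;
  ss  : nat -> nat
}.

Definition two_tree_decomp (G : sym2tree) : Prop :=
  [/\ mgraph (sV G) (sE G),
      spanning_tree (sV G) (sT1 G),
      spanning_tree (sV G) (sT2 G) &
      emeq (sE G) (sT1 G ++ sT2 G)].

(** s is an automorphism of the multigraph (V,E) of order dividing 2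
    (i.e. theta : Z_2 -> Aut(G) is a homomorphism, s = theta(s)) *)
Definition inv_aut (V : seq nat) (E : seq edge) (s : nat -> nat) : Prop :=
  [/\ forall x, x \in V -> s x \in V,
      forall x, x \in V -> s (s x) = x &
      emeq (map (emap s) E) E].

Definition nontrivial_on (V : seq nat) (s : nat -> nat) : Prop :=
  exists2 x, x \in V & s x != x.

Definition sym_two_tree_decomp (G : sym2tree) : Prop :=
  [/\ two_tree_decomp G,
      inv_aut (sV G) (sE G) (ss G),
      nontrivial_on (sV G) (ss G),
      emeq (map (emap (ss G)) (sT1 G)) (sT1 G) &
      emeq (map (emap (ss G)) (sT2 G)) (sT2 G)].

Definition no_fixed_edges (G : sym2tree) : Prop :=
  forall e, e \in sE G -> nrm (emap (ss G) e) != nrm e.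

Definition is_K1 (G : sym2tree) : Prop :=
  exists x, [/\ sV G = [:: x], sE G = [::], sT1 G = [::], sT2 G = [::]
              & ss G x = x].

Definition G2sym (G : sym2tree) : Prop :=
  (sym_two_tree_decomp G /\ no_fixed_edges G) \/ is_K1 G.

Definition new_edges (s' : nat -> nat) (v : nat) (ws : seq nat) : seq edge :=
  flatten [seq [:: (v, w); emap s' (v, w)] | w <- ws].

(** E(G) - {e, s(e)} (multiset difference; if s(e) = e only one copy) *)
Definition minus_pair (s : nat -> nat) (E : seq edge) (e : edge)
    (R : seq edge) : Prop :=
  if nrm (emap s e) == nrm e then emeq E (e :: R)
  else emeq E (e :: emap s e :: R).

Definition sym_ext (d j : nat) (V : seq nat) (E : seq edge) (s : nat -> nat)
    (V' : seq nat) (E' : seq edge) (s' : nat -> nat) : Prop :=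
  exists v,
  [/\ [/\ v \notin V, s' v \notin V & v != s' v],
      perm_eq V' (v :: s' v :: V),
      (forall x, x \in V -> s' x = s x) &
      if j == 0 then
        exists ws : seq nat,
          [/\ size ws = d, all (mem V) ws & emeq E' (E ++ new_edges s' v ws)]
      else
        exists ws : seq nat, exists R : seq edge,
          [/\ size ws = d.+1, all (mem V) ws,
              nrm (nth 0 ws 0, nth 0 ws 1) \in map nrm E,
              minus_pair s E (nth 0 ws 0, nth 0 ws 1) R &
              emeq E' (R ++ new_edges s' v ws)]].

Definition sym_2tree_ext (j : nat) (G G' : sym2tree) : Prop :=
  sym_ext 2 j (sV G) (sE G) (ss G) (sV G') (sE G') (ss G') /\
  exists k1 k2, [/\ k1 <= 1, k2 <= 1, k1 + k2 = j,
    sym_ext 1 k1 (sV G) (sT1 G) (ss G) (sV G') (sT1 G') (ss G') &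
    sym_ext 1 k2 (sV G) (sT2 G) (ss G) (sV G') (sT2 G') (ss G')].

(* Main.v *)
Require Import Defs.
From mathcomp Require Import all_boot zify.
From Stdlib Require Import Classical.
Set Implicit Arguments. Unset Strict Implicit. Unset Printing Implicit Defensive.

Definition mult (E : seq edge) (e : edge) := count (fun f => nrm f == e) E.
Definition inc (x : nat) (f : edge) := (f.1 == x) || (f.2 == x).
Definition adjb (E : seq edge) x y := ((x, y) \in E) || ((y, x) \in E).

Lemma nrmC x y : nrm (y, x) = nrm (x, y).
Proof. rewrite /nrm /=; case: ifP; case: ifP => //= H1 H2; f_equal; lia. Qed.

Lemma nrm_eqP f x y : nrm f = nrm (x, y) -> f = (x, y) \/ f = (y, x).
Proof.
case: f => a b; rewrite /nrm /=; do 2 case: ifP => _ ; case=> -> ->; auto.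
Qed.

Lemma nrm_nrm f : nrm (nrm f) = nrm f.
Proof. case: f => a b; rewrite /nrm /=; case: (leqP a b) => H /=. by rewrite H. by rewrite ltnW. Qed.

Lemma inc_nrm x f : inc x (nrm f) = inc x f.
Proof. case: f => a b; rewrite /nrm /inc /=; case: ifP => //= _; by rewrite orbC. Qed.

Lemma emeqP E F : emeq E F <-> forall e, mult E e = mult F e.
Proof.
rewrite /emeq /mult; split.
  by move=> /permP H e; have := H (pred1 e); rewrite !count_map.
move=> H; apply/allP => x _ /=; apply/eqP.
by have := H x; rewrite !count_map.
Qed.

Lemma adjbC E x y : adjb E x y = adjb E y x.
Proof. by rewrite /adjb orbC. Qed.

Lemma reach1 E x y : adjb E x y -> reach E x y.
Proof. move=> H; apply: (reach_step H); exact: reach_refl. Qed.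

Lemma reach_trans E x y z : reach E x y -> reach E y z -> reach E x z.
Proof. elim=> // a b c H _ IH /IH; exact: reach_step. Qed.

Lemma reach_sym E x y : reach E x y -> reach E y x.
Proof.
elim=> [a|a b c H _ IH]; first exact: reach_refl.
apply: (reach_trans IH); apply: reach1; by rewrite adjbC.
Qed.

Lemma reach_map E F (rep : nat -> nat) :
  (forall x y, (x, y) \in E -> reach F (rep x) (rep y)) ->
  forall x y, reach E x y -> reach F (rep x) (rep y).
Proof.
move=> H x y; elim=> [a|a b c /orP[] Hab _ IH]; first exact: reach_refl.
  exact: reach_trans (H _ _ Hab) IH.
exact: reach_trans (reach_sym (H _ _ Hab)) IH.
Qed.

Lemma reach_sub E F x y :
  (forall x y, (x, y) \in E -> reach F x y) -> reach E x y -> reach F x y.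
Proof. move=> H; exact: (@reach_map E F id H). Qed.

Lemma adjb_mult E x y : adjb E x y <-> 0 < mult E (nrm (x, y)).
Proof.
rewrite /mult -has_count; split.
  case/orP=> H; apply/hasP; first by exists (x,y).
  by exists (y,x); rewrite // nrmC.
case/hasP=> f Hf /eqP /nrm_eqP [] ?; subst f; by rewrite /adjb Hf ?orbT.
Qed.

Lemma reach_emeq E F x y : emeq E F -> reach E x y -> reach F x y.
Proof.
move=> /emeqP H; apply: reach_sub => a b Hab; apply: reach1.
apply/adjb_mult; rewrite -H; apply/adjb_mult; by rewrite /adjb Hab.
Qed.

Lemma reach_first E x y : reach E x y -> x != y -> 0 < count (inc x) E.
Proof.
case=> [a|a b c H _]; first by rewrite eqxx.
move=> _; rewrite -has_count. case/orP: H => H; apply/hasP.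
 by exists (a,b); rewrite // /inc eqxx.
by exists (b,a); rewrite // /inc eqxx orbT.
Qed.
Lemma reach_split p q E x y : reach ((p, q) :: E) x y ->
  reach E x y \/ ((reach E x p \/ reach E x q) /\ (reach E p y \/ reach E q y)).
Proof.
elim=> [a|a b c H _ IH]; first by left; exact: reach_refl.
move: H; rewrite /adjb !in_cons !xpair_eqE.
have HH : (((a, b) \in E) || ((b, a) \in E)) -> reach E a b.
  by move=> H; apply: reach1.
case/orP=> [/orP[/andP[/eqP ? /eqP ?]|Hab]|/orP[/andP[/eqP ? /eqP ?]|Hab]]; subst.
- right; split; first by left; exact: reach_refl.
  case: IH => [H|[_ H]]; by [right | ].
- have Rab : reach E a b by apply: HH; rewrite Hab.
  case: IH => [H|[[H|H] H']]; [left | right | right]; try split; try done;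
    [exact: reach_trans Rab H| left | right]; exact: reach_trans Rab H.
- right; split; first by right; exact: reach_refl.
  case: IH => [H|[_ H]]; by [left | ].
- have Rab : reach E a b by apply: HH; rewrite Hab orbT.
  case: IH => [H|[[H|H] H']]; [left | right | right]; try split; try done;
    [exact: reach_trans Rab H| left | right]; exact: reach_trans Rab H.
Qed.


Lemma reach_cons e E x y : reach E x y -> reach (e :: E) x y.
Proof. apply: reach_sub => a b H; apply: reach1; by rewrite /adjb in_cons H orbT. Qed.

Lemma comps E (L : seq nat) : uniq L -> exists R : seq nat,
  [/\ uniq R, {subset R <= L},
      (forall x, x \in L -> exists2 r, r \in R & reach E x r),
      (forall x y, x \in R -> y \in R -> reach E x y -> x = y) &
      size L <= size E + size R].
Proof.
move=> uL; elim: E => [|[p q] E [R' [uR sR cR pR szR]]].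
  exists L; split=> //.
  - by move=> x Hx; exists x => //; exact: reach_refl.
  - by move=> x y _ _ H; inversion H => //; move: H0; rewrite /adjb.
have RR : forall x y, reach E x y -> reach ((p,q)::E) x y by move=> x y; exact: reach_cons.
have Rpq : reach ((p,q)::E) q p.
  by apply: reach1; rewrite /adjb mem_head orbT.
case: (classic (exists r1 r2, [/\ r1 \in R', r2 \in R', r1 != r2,
          reach E r1 p & reach E r2 q])).
- case=> r1 [r2 [H1 H2 H12 Hr1 Hr2]].
  exists (rem r2 R'); split.
  + exact: rem_uniq.
  + by move=> x /mem_rem /sR.
  + move=> x /cR [r Hr Hxr].
    case: (eqVneq r r2) => [?|Hne]; last first.
      by exists r; [rewrite (mem_rem_uniq _ uR) inE Hne | exact: RR].
    subst r; exists r1; first by rewrite (mem_rem_uniq _ uR) inE H1 H12.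
    apply: (reach_trans (RR _ _ Hxr)); apply: (reach_trans (RR _ _ Hr2)).
    exact: reach_trans Rpq (RR _ _ (reach_sym Hr1)).
  + move=> x y; rewrite !(mem_rem_uniq _ uR) !inE => /andP[nx Hx] /andP[ny Hy].
    case/reach_split => [|[[Hp|Hq] [Hp'|Hq']]]; first exact: pR.
    * exact: pR (reach_trans Hp Hp').
    * have := pR _ _ Hy H2 (reach_trans (reach_sym Hq') (reach_sym Hr2)) => E1.
      by rewrite E1 eqxx in ny.
    * have := pR _ _ Hx H2 (reach_trans Hq (reach_sym Hr2)) => E1.
      by rewrite E1 eqxx in nx.
    * exact: pR (reach_trans Hq Hq').
  + rewrite size_rem //=. move: szR. have : 0 < size R' by case: (R') H2.
    lia.
- move=> Hno; exists R'; split=> //.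
  + by move=> x /cR [r Hr Hxr]; exists r => //; exact: RR.
  + move=> x y Hx Hy.
    case/reach_split => [|[[Hp|Hq] [Hp'|Hq']]]; first exact: pR.
    * exact: pR (reach_trans Hp Hp').
    * case: (eqVneq x y) => // Hxy; exfalso; apply: Hno.
      by exists x, y; split => //; exact: reach_sym.
    * case: (eqVneq x y) => // Hxy; exfalso; apply: Hno.
      exists y, x; split => //; [by rewrite eq_sym | exact: reach_sym].
    * exact: pR (reach_trans Hq Hq').
  + move: szR => /=; lia.
Qed.

Lemma conn_lb E (L : seq nat) x0 : uniq L -> x0 \in L ->
  (forall x y, x \in L -> y \in L -> reach E x y) -> size L <= (size E).+1.
Proof.
move=> uL H0 HC; have [R [uR sR cR pR szR]] := comps E uL.
suff : size R <= 1 by move: szR; lia.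
case: R uR sR cR pR {szR} => [|r1 [|r2 R]] //= uR sR _ pR.
have m1 : r1 \in [:: r1, r2 & R] by rewrite mem_head.
have m2 : r2 \in [:: r1, r2 & R] by rewrite !in_cons eqxx orbT.
have E12 := pR r1 r2 m1 m2 (HC _ _ (sR _ m1) (sR _ m2)).
by move: uR; rewrite E12 mem_head.
Qed.

Lemma mult_cat A B e : mult (A ++ B) e = mult A e + mult B e.
Proof. by rewrite /mult count_cat. Qed.
Lemma mult_cons f A e : mult (f :: A) e = (nrm f == e) + mult A e.
Proof. by []. Qed.
Lemma mult_nil e : mult [::] e = 0. Proof. by []. Qed.

Lemma emeq_size E F : emeq E F -> size E = size F.
Proof. by move=> /perm_size; rewrite !size_map. Qed.

Lemma emeq_sym E F : emeq E F -> emeq F E.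
Proof. by move=> /emeqP H; apply/emeqP => e; rewrite H. Qed.

Lemma emeq_trans E F G : emeq E F -> emeq F G -> emeq E G.
Proof. by move=> /emeqP H /emeqP H'; apply/emeqP => e; rewrite H H'. Qed.

Lemma mult_pos_mem E f : 0 < mult E (nrm f) -> exists2 g, g \in E & (g = f \/ g = (f.2, f.1)).
Proof.
rewrite /mult -has_count => /hasP [g Hg /eqP].
case: f => a b /= /nrm_eqP H; by exists g.
Qed.

Lemma mem_mult_pos E f : f \in E -> 0 < mult E (nrm f).
Proof. move=> H; rewrite /mult -has_count; apply/hasP; by exists f. Qed.

Lemma deg_emeq E F x : emeq E F -> count (inc x) E = count (inc x) F.
Proof.
move=> /permP H; have := H (inc x); rewrite !count_map.
by rewrite (eq_count (a1 := preim nrm (inc x)) (a2 := inc x)) ?(eq_count (a1 := preim nrm (inc x)) (a2 := inc x)) // => f /=; rewrite inc_nrm.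
Qed.

Lemma mult_filter P E e : (forall f, P (nrm f) = P f) ->
  mult (filter P E) e = if P e then mult E e else 0.
Proof.
move=> HP; rewrite /mult count_filter; elim: E => [|f E IH] /=; first by case: (P e).
rewrite IH; case: eqP => [<-|_]; rewrite ?HP /=; case: (P f) => //=; case: (P e) => //.
Qed.

Lemma count_inc2 T x e1 e2 : e1 != e2 -> inc x e1 -> inc x e2 ->
  mult T e1 + mult T e2 <= count (inc x) T.
Proof.
move=> ne i1 i2; elim: T => [|f T IH] //=; rewrite /mult /= -!/(mult _ _).
case: (eqVneq (nrm f) e1) => [E1|N1]; case: (eqVneq (nrm f) e2) => [E2|N2] /=.
- by rewrite -E1 -E2 eqxx in ne.
- have : inc x f by rewrite -inc_nrm E1.
  move=> ->; move: IH; lia.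
- have : inc x f by rewrite -inc_nrm E2.
  move=> ->; move: IH; lia.
- move: IH; lia.
Qed.

Lemma sumn_ge (V : seq nat) (F : nat -> nat) k :
  (forall x, x \in V -> k <= F x) -> k * size V <= sumn (map F V).
Proof.
elim: V => [|x V IH] H /=; first by rewrite muln0.
have := H x (mem_head _ _).
have : k * size V <= sumn (map F V).
  by apply: IH => y Hy; apply: H; rewrite in_cons Hy orbT.
rewrite mulnS; lia.
Qed.

Lemma sumn_count_mem (V : seq nat) a : sumn [seq (a == x : nat) | x <- V] = count_mem a V.
Proof. elim: V => //= x V ->; by rewrite eq_sym. Qed.

Lemma sumn_mapD (V : seq nat) (F G : nat -> nat) :
  sumn [seq F x + G x | x <- V] = sumn (map F V) + sumn (map G V).
Proof. elim: V => //= x V ->; lia. Qed.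

Lemma deg_sum (V : seq nat) E : uniq V ->
  (forall e, e \in E -> [/\ e.1 \in V, e.2 \in V & e.1 != e.2]) ->
  sumn [seq count (inc x) E | x <- V] = 2 * size E.
Proof.
move=> uV; elim: E => [|e E IH] HE /=; first by elim: (V) => //.
have {IH} : sumn [seq count (inc x) E | x <- V] = 2 * size E.
  by apply: IH => f Hf; apply: HE; rewrite in_cons Hf orbT.
have [H1 H2 H12] := HE e (mem_head _ _).
have : sumn [seq (inc x e : nat) | x <- V] = 2.
  have -> : [seq (inc x e : nat) | x <- V] =
     [seq ((e.1 == x) : nat) + ((e.2 == x) : nat) | x <- V].
    apply: eq_map => x; rewrite /inc.
    case: (eqVneq e.1 x) => [E1|]; case: (eqVneq e.2 x) => [E2|] //=.
    by rewrite E1 E2 eqxx in H12.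
  by rewrite sumn_mapD !sumn_count_mem !count_uniq_mem // H1 H2.
move=> H H'.
by rewrite (sumn_mapD _ (fun x => (inc x e : nat)) (fun x => count (inc x) E)) H H' mulnS.
Qed.

Definition rmv v w (T : seq edge) := filter (fun f => ~~ inc v f && ~~ inc w f) T.

Record sgood (V : seq nat) (s : nat -> nat) : Prop := SGood {
  sg_uniq : uniq V; sg_in : forall x, x \in V -> s x \in V;
  sg_inv : forall x, x \in V -> s (s x) = x }.

Record tgood (V : seq nat) (s : nat -> nat) (T : seq edge) : Prop := TGood {
  tg_end : forall f, f \in T -> [/\ f.1 \in V, f.2 \in V & f.1 != f.2];
  tg_sym : emeq (map (emap s) T) T;
  tg_nofix : forall f, f \in T -> nrm (emap s f) != nrm f }.

Lemma s_inj V s x y : sgood V s -> x \in V -> y \in V -> (s x == s y) = (x == y).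
Proof.
move=> [_ _ Hi] Hx Hy; apply/eqP/eqP => [H|->] //.
by rewrite -(Hi x Hx) -(Hi y Hy) H.
Qed.

Lemma count3 (T : Type) (p q r : pred T) L :
  count r L = count (fun f => p f && r f) L + count (fun f => ~~ p f && q f && r f) L
            + count (fun f => ~~ p f && ~~ q f && r f) L.
Proof. elim: L => //= x L ->; case: (p x); case: (q x); case: (r x) => /=; lia. Qed.

Lemma mult_filterE P T e : mult (filter P T) e = count (fun f => P f && (nrm f == e)) T.
Proof. by rewrite /mult count_filter; apply: eq_count => f; rewrite /= andbC. Qed.

Lemma inc_emap V s v f : sgood V s -> v \in V -> f.1 \in V -> f.2 \in V ->
  inc (s v) (emap s f) = inc v f.
Proof. by move=> sg Hv H1 H2; rewrite /inc /= !(s_inj sg) //. Qed.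

Lemma local_dec V s T v : sgood V s -> tgood V s T -> v \in V -> s v != v ->
  emeq T (filter (inc v) T ++ map (emap s) (filter (inc v) T) ++ rmv v (s v) T).
Proof.
move=> sg tg Hv Hsv; apply/emeqP => e; rewrite !mult_cat.
rewrite /mult (count3 (inc v) (inc (s v))) -!/(mult _ _) -mult_filterE /rmv mult_filterE.
rewrite addnA; congr (_ + _ + _); last by rewrite mult_filterE.
have -> : count (fun f => ~~ inc v f && inc (s v) f && (nrm f == e)) T =
          count (fun f => inc (s v) f && (nrm f == e)) T.
  apply: eq_in_count => f Hf /=; case: (boolP (inc v f)) => //= iv.
  case: (boolP (inc (s v) f)) => //= iw; exfalso.
  have [H1 H2 H12] := tg_end tg Hf.
  have : (f = (v, s v)) \/ (f = (s v, v)).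
    move: iv iw H12 Hsv; rewrite /inc; case: f {Hf H1 H2} => a b /= H H' H'' H'''.
    have : (a = v /\ b = s v) \/ (a = s v /\ b = v) by lia.
    by case=> [[-> ->]|[-> ->]]; auto.
  have := tg_nofix tg Hf.
  have svv : s (s v) = v by apply: (sg_inv sg).
  by move=> nf [] Ef; move: nf; rewrite Ef /emap /= svv nrmC eqxx.
rewrite -mult_filterE mult_filter; last by move=> f; rewrite inc_nrm.
have /emeqP <- := tg_sym tg.
rewrite -mult_filter; last by move=> f; rewrite inc_nrm.
rewrite filter_map; congr (mult (map _ _) _); apply: eq_in_filter => f Hf /=.
have [H1 H2 _] := tg_end tg Hf; exact: inc_emap sg Hv H1 H2.
Qed.

Definition oth v (g : edge) := if g.1 == v then g.2 else g.1.

Lemma inc_oth v g : inc v g -> g = (v, oth v g) \/ g = (oth v g, v).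
Proof. case: g => a b; rewrite /inc /oth /=; case: (eqVneq a v) => [E|av] /=; first by left; rewrite E. by move=> /eqP ->; right. Qed.

Lemma nrm_oth v g : inc v g -> nrm g = nrm (v, oth v g).
Proof. by move/inc_oth; move: (oth v g) => a [] ->; rewrite // nrmC. Qed.

Lemma nofix_vw V s T v f : sgood V s -> tgood V s T -> v \in V -> f \in T ->
  nrm f = nrm (v, s v) -> False.
Proof.
move=> sg tg Hv Hf E; have := tg_nofix tg Hf.
have svv : s (s v) = v by apply: (sg_inv sg).
by case/nrm_eqP: E => ->; rewrite /emap /= svv nrmC eqxx.
Qed.

Lemma filter_sub (P : pred edge) T g : g \in filter P T -> g \in T /\ P g.
Proof. by rewrite mem_filter => /andP[]. Qed.

Lemma oth_props V s T v g : sgood V s -> tgood V s T -> v \in V -> g \in T -> inc v g ->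
  [/\ oth v g \in V, oth v g != v, oth v g != s v & nrm g = nrm (v, oth v g)].
Proof.
move=> sg tg Hv Hg ig; have [H1 H2 H12] := tg_end tg Hg.
have E := nrm_oth ig; split=> //.
- by rewrite /oth; case: ifP.
- by move: (oth v g) (inc_oth ig) H12 => o [] -> /= H //; rewrite eq_sym.
- apply/negP => /eqP E'; rewrite E' in E; exact: nofix_vw sg tg Hv Hg E.
Qed.

Lemma local1 V s T v : sgood V s -> tgood V s T -> v \in V -> s v != v ->
  count (inc v) T = 1 ->
  exists a, [/\ a \in V, a != v, a != s v &
               emeq T ((v, a) :: (s v, s a) :: rmv v (s v) T)].
Proof.
move=> sg tg Hv Hsv Hc; have D := local_dec sg tg Hv Hsv.
have : size (filter (inc v) T) = 1 by rewrite size_filter.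
case Ef: (filter (inc v) T) => [|g [|]] // _.
have [Hg ig] : g \in T /\ inc v g by apply: filter_sub; rewrite Ef mem_head.
have [Ha1 Ha2 Ha3 Ea] := oth_props sg tg Hv Hg ig.
exists (oth v g); split => //; apply: emeq_trans D _; rewrite Ef.
apply/emeqP => e; rewrite !map_cons !cat_cons !cat0s !mult_cons Ea /emap.
suff -> : nrm (s g.1, s g.2) = nrm (s v, s (oth v g)) by [].
by move: (oth v g) (inc_oth ig) => a [] ->; rewrite // nrmC.
Qed.

Lemma local2 V s T v : sgood V s -> tgood V s T -> v \in V -> s v != v ->
  count (inc v) T = 2 ->
  exists a b, [/\ a \in V, a != v, a != s v & [/\ b \in V, b != v, b != s v &
               emeq T ((v, a) :: (s v, s a) :: (v, b) :: (s v, s b) :: rmv v (s v) T)]].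
Proof.
move=> sg tg Hv Hsv Hc; have D := local_dec sg tg Hv Hsv.
have : size (filter (inc v) T) = 2 by rewrite size_filter.
case Ef: (filter (inc v) T) => [|g1 [|g2 []]] // _.
have [Hg1 ig1] : g1 \in T /\ inc v g1 by apply: filter_sub; rewrite Ef mem_head.
have [Hg2 ig2] : g2 \in T /\ inc v g2.
  by apply: filter_sub; rewrite Ef !in_cons eqxx orbT.
have [Ha1 Ha2 Ha3 Ea] := oth_props sg tg Hv Hg1 ig1.
have [Hb1 Hb2 Hb3 Eb] := oth_props sg tg Hv Hg2 ig2.
exists (oth v g1), (oth v g2); split => //; split => //; apply: emeq_trans D _; rewrite Ef.
apply/emeqP => e; rewrite !map_cons !cat_cons !cat0s !mult_cons Ea Eb /emap.
have -> : nrm (s g1.1, s g1.2) = nrm (s v, s (oth v g1)).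
  by move: (oth v g1) (inc_oth ig1) => a [] ->; rewrite // nrmC.
have -> : nrm (s g2.1, s g2.2) = nrm (s v, s (oth v g2)).
  by move: (oth v g2) (inc_oth ig2) => a [] ->; rewrite // nrmC.
congr (_ + _); exact: addnCA.
Qed.

Ltac genb := repeat match goal with |- context [nat_of_bool ?b] =>
  let B := fresh "B" in set B := nat_of_bool b; clearbody B end.

Lemma no_short_cycle V s T v a b R : uniq V -> v \in V ->
  spanning_tree V T ->
  emeq T ((v, a) :: (s v, s a) :: (v, b) :: (s v, s b) :: R) ->
  a != b /\ nrm (s a, s b) != nrm (a, b).
Proof.
move=> uV Hv [Hc Hs] Em.
suff : ~ reach ((s v, s a) :: (v, b) :: (s v, s b) :: R) v a.
  move=> H; split; apply/negP.
  - move/eqP=> Eab; apply: H; apply: reach1; by rewrite /adjb Eab !in_cons eqxx /= ?orbT.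
  - move/eqP/nrm_eqP => [[E1 E2]|[E1 E2]]; apply: H.
    + apply: (@reach_trans _ _ b); first by apply: reach1; rewrite /adjb !in_cons eqxx /= ?orbT.
      apply: (@reach_trans _ _ (s v)); first by apply: reach1; rewrite /adjb E2 !in_cons eqxx /= ?orbT.
      by apply: reach1; rewrite /adjb E1 !in_cons eqxx /= ?orbT.
    + apply: (@reach_trans _ _ b); first by apply: reach1; rewrite /adjb !in_cons eqxx /= ?orbT.
      apply: (@reach_trans _ _ (s v)); first by apply: reach1; rewrite /adjb -E1 !in_cons eqxx /= ?orbT.
      by apply: reach1; rewrite /adjb E2 !in_cons eqxx /= ?orbT.
move=> Hva.
set Tm := (s v, s a) :: (v, b) :: (s v, s b) :: R.
have Hc' : forall x y, x \in V -> y \in V -> reach Tm x y.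
  move=> x y Hx Hy; have := reach_emeq Em (Hc x y Hx Hy).
  apply: reach_sub => p q; rewrite in_cons => /orP [/eqP [-> ->]|H] //.
  by apply: reach1; rewrite /adjb H.
have := conn_lb uV Hv Hc'.
have := emeq_size Em; rewrite Hs /Tm /=.
have : 0 < size V by case: (V) Hv.
lia.
Qed.

Definition Vg (V : seq nat) v w := filter (fun x => (x != v) && (x != w)) V.

Lemma mem_Vg V v w x : (x \in Vg V v w) = [&& x != v, x != w & x \in V].
Proof. by rewrite /Vg mem_filter andbA. Qed.

Lemma sv_props V s v : sgood V s -> v \in V -> s v != v ->
  [/\ forall x, x \in V -> (s x == v) = (x == s v),
      forall x, x \in V -> (s x == s v) = (x == v) & s v \in V].
Proof.
move=> sg Hv Hsv; have Hsv' := sg_in sg Hv; split => // x Hx.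
- by rewrite -{1}(sg_inv sg Hv) (s_inj sg).
- by rewrite (s_inj sg).
Qed.

Lemma sgood_Vg V s v : sgood V s -> v \in V -> s v != v -> sgood (Vg V v (s v)) s.
Proof.
move=> sg Hv Hsv; have [P1 P2 P3] := sv_props sg Hv Hsv.
split; first by rewrite filter_uniq // (sg_uniq sg).
- move=> x; rewrite !mem_Vg => /and3P [n1 n2 Hx].
  by rewrite P1 // P2 // n1 n2 (sg_in sg Hx).
- by move=> x; rewrite mem_Vg => /and3P [_ _ Hx]; apply: (sg_inv sg).
Qed.

Lemma perm_Vg V s v : sgood V s -> v \in V -> s v != v ->
  perm_eq V (v :: s v :: Vg V v (s v)).
Proof.
move=> sg Hv Hsv; have [P1 P2 P3] := sv_props sg Hv Hsv.
apply: uniq_perm; first exact: (sg_uniq sg).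
  rewrite /= !mem_Vg !eqxx /= andbF /= filter_uniq ?(sg_uniq sg) // andbT.
  by rewrite in_cons negb_or mem_Vg eqxx /= eq_sym Hsv.
move=> x; rewrite !in_cons mem_Vg.
case: (eqVneq x v) => [->|nv] /=; first by rewrite Hv.
by case: (eqVneq x (s v)) => [->|nw] /=.
Qed.

Lemma rmvP_nrm v w f : (~~ inc v (nrm f) && ~~ inc w (nrm f)) = (~~ inc v f && ~~ inc w f).
Proof. by rewrite !inc_nrm. Qed.

Lemma rmv_good V s T v : sgood V s -> tgood V s T -> v \in V -> s v != v ->
  tgood (Vg V v (s v)) s (rmv v (s v) T).
Proof.
move=> sg tg Hv Hsv; split.
- move=> f /filter_sub [Hf /andP [n1 n2]]; have [H1 H2 H12] := tg_end tg Hf.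
  move: n1 n2; rewrite /inc !negb_or !mem_Vg H1 H2 H12 => /andP [-> ->] /andP [-> ->] //.
- apply/emeqP => e.
  have -> : map (emap s) (rmv v (s v) T) = rmv v (s v) (map (emap s) T).
    rewrite /rmv filter_map; congr map; apply: eq_in_filter => f Hf /=.
    have [H1 H2 _] := tg_end tg Hf.
    have E2 := inc_emap sg (sg_in sg Hv) H1 H2; rewrite (sg_inv sg Hv) in E2.
    by rewrite (inc_emap sg Hv H1 H2) E2 andbC.
  rewrite /rmv !mult_filter; try by move=> f; apply: rmvP_nrm.
  by have /emeqP -> := tg_sym tg.
- move=> f /filter_sub [Hf _]; exact (tg_nofix tg Hf).
Qed.

Lemma reach_red (T L T0 : seq edge) (rep : nat -> nat) (W V : seq nat) :
  (forall x y, x \in V -> y \in V -> reach T x y) -> emeq T L ->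
  (forall p q, (p, q) \in L -> reach T0 (rep p) (rep q)) ->
  {subset W <= V} -> (forall x, x \in W -> rep x = x) ->
  forall x y, x \in W -> y \in W -> reach T0 x y.
Proof.
move=> Hc Em HL sWV Hr x y Hx Hy; rewrite -(Hr x Hx) -(Hr y Hy).
apply: (reach_map HL); apply: reach_emeq Em _; apply: Hc; exact: sWV.
Qed.

Lemma N_good V s T v a b : sgood V s -> tgood V s T -> v \in V -> s v != v ->
  a \in Vg V v (s v) -> b \in Vg V v (s v) -> a != b -> nrm (s a, s b) != nrm (a, b) ->
  tgood (Vg V v (s v)) s ((a, b) :: (s a, s b) :: rmv v (s v) T).
Proof.
move=> sg tg Hv Hsv Ha Hb Hab Hn.
have sg' := sgood_Vg sg Hv Hsv; have rg := rmv_good sg tg Hv Hsv.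
have Hsa := sg_in sg' Ha; have Hsb := sg_in sg' Hb.
have ssa := sg_inv sg' Ha; have ssb := sg_inv sg' Hb.
split.
- move=> f; rewrite !in_cons => /orP [/eqP ->|/orP [/eqP ->|Hf]] /=.
  + by split.
  + by split => //; rewrite (s_inj sg').
  + exact (tg_end rg Hf).
- apply/emeqP => e; rewrite map_cons map_cons !mult_cons /emap /= ssa ssb.
  have /emeqP -> := tg_sym rg; rewrite -/(emap s (a, b)).
  genb; lia.
- move=> f; rewrite !in_cons => /orP [/eqP ->|/orP [/eqP ->|Hf]] //.
  + by rewrite /emap /= ssa ssb eq_sym.
  + exact (tg_nofix rg Hf).
Qed.

Lemma rep_facts V s v a : sgood V s -> v \in V -> s v != v -> a \in V -> a != v -> a != s v ->
  [/\ (s a == v) = false, (s a == s v) = false, (a == v) = false, (a == s v) = false &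
      (s v == v) = false].
Proof.
move=> sg Hv Hsv Ha n1 n2; have [P1 P2 P3] := sv_props sg Hv Hsv.
by rewrite P1 // P2 // !(negbTE n1) !(negbTE n2) (negbTE Hsv).
Qed.

Lemma rmv_mem v w T p q : (p, q) \in rmv v w T ->
  [/\ (p, q) \in T, (p == v) = false, (q == v) = false, (p == w) = false & (q == w) = false].
Proof.
move/filter_sub => [H]; rewrite /inc /= !negb_or => /andP [/andP [n1 n2] /andP[n3 n4]].
by rewrite H (negbTE n1) (negbTE n2) (negbTE n3) (negbTE n4).
Qed.

Lemma tree_red1 V s T v : sgood V s -> tgood V s T -> spanning_tree V T -> v \in V ->
  s v != v -> count (inc v) T = 1 ->
  exists a, [/\ a \in Vg V v (s v), tgood (Vg V v (s v)) s (rmv v (s v) T),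
     spanning_tree (Vg V v (s v)) (rmv v (s v) T) &
     emeq T (rmv v (s v) T ++ new_edges s v [:: a])].
Proof.
move=> sg tg [Hc Hs] Hv Hsv Hd.
have [a [Ha1 Ha2 Ha3 Em]] := local1 sg tg Hv Hsv Hd.
have [R1 R2 R3 R4 R5] := rep_facts sg Hv Hsv Ha1 Ha2 Ha3.
exists a; split.
- by rewrite mem_Vg Ha1 Ha2 Ha3.
- exact: rmv_good.
- split.
  + apply: (reach_red (V := V) Hc Em
      (rep := fun z => if z == v then a else if z == s v then s a else z)).
    * move=> p q; rewrite !in_cons => /orP [/eqP [-> ->]|/orP [/eqP [-> ->]|Hpq]].
      -- rewrite eqxx R3 R4; exact: reach_refl.
      -- rewrite R5 eqxx R1 R2; exact: reach_refl.
      -- have [Hpq' -> -> -> ->] := rmv_mem Hpq; apply: reach1; by rewrite /adjb Hpq.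
    * by move=> x; rewrite mem_Vg => /and3P [].
    * by move=> x; rewrite mem_Vg => /and3P [n1 n2 _]; rewrite (negbTE n1) (negbTE n2).
  + have := emeq_size Em; have := perm_size (perm_Vg sg Hv Hsv); rewrite Hs /=.
    lia.
- apply: emeq_trans Em _; apply/emeqP => e.
  rewrite mult_cat (_ : new_edges s v [:: a] = [:: (v, a); (s v, s a)]) //.
  rewrite !mult_cons mult_nil; genb; lia.
Qed.

Lemma tree_red2 V s T v : sgood V s -> tgood V s T -> spanning_tree V T -> v \in V ->
  s v != v -> count (inc v) T = 2 ->
  exists a b, [/\ a \in Vg V v (s v), b \in Vg V v (s v),
     nrm (s a, s b) != nrm (a, b),
     tgood (Vg V v (s v)) s ((a, b) :: (s a, s b) :: rmv v (s v) T) /\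
     spanning_tree (Vg V v (s v)) ((a, b) :: (s a, s b) :: rmv v (s v) T) &
     emeq T (rmv v (s v) T ++ new_edges s v [:: a; b])].
Proof.
move=> sg tg [Hc Hs] Hv Hsv Hd.
have [a [b [Ha1 Ha2 Ha3 [Hb1 Hb2 Hb3 Em]]]] := local2 sg tg Hv Hsv Hd.
have [Hab Hn] := no_short_cycle (sg_uniq sg) Hv (conj Hc Hs) Em.
have [R1 R2 R3 R4 R5] := rep_facts sg Hv Hsv Ha1 Ha2 Ha3.
have [Q1 Q2 Q3 Q4 _] := rep_facts sg Hv Hsv Hb1 Hb2 Hb3.
have Ha : a \in Vg V v (s v) by rewrite mem_Vg Ha1 Ha2 Ha3.
have Hb : b \in Vg V v (s v) by rewrite mem_Vg Hb1 Hb2 Hb3.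
exists a, b; split => //.
  split; first exact: N_good.
  split.
  + apply: (reach_red (V := V) Hc Em
      (rep := fun z => if z == v then a else if z == s v then s a else z)).
    * move=> p q; rewrite !in_cons.
      move=> /orP [/eqP [-> ->]|/orP [/eqP [-> ->]|/orP [/eqP [-> ->]|/orP [/eqP [-> ->]|Hpq]]]].
      -- rewrite eqxx R3 R4; exact: reach_refl.
      -- rewrite R5 eqxx R1 R2; exact: reach_refl.
      -- rewrite eqxx Q3 Q4; apply: reach1; by rewrite /adjb mem_head.
      -- rewrite R5 eqxx Q1 Q2; apply: reach1; by rewrite /adjb !in_cons eqxx /= ?orbT.
      -- have [Hpq' -> -> -> ->] := rmv_mem Hpq; apply: reach1.
         by rewrite /adjb !in_cons Hpq /= ?orbT.
    * by move=> x; rewrite mem_Vg => /and3P [].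
    * by move=> x; rewrite mem_Vg => /and3P [n1 n2 _]; rewrite (negbTE n1) (negbTE n2).
  + have := emeq_size Em; have := perm_size (perm_Vg sg Hv Hsv); rewrite Hs /=.
    lia.
apply: emeq_trans Em _; apply/emeqP => e.
rewrite mult_cat (_ : new_edges s v [:: a; b] = [:: (v, a); (s v, s a); (v, b); (s v, s b)]) //.
rewrite !mult_cons mult_nil; genb; lia.
Qed.

Definition xbase (V W : seq nat) (s : nat -> nat) v :=
  [/\ v \notin W, s v \notin W, v != s v & perm_eq V (v :: s v :: W)].

Lemma xbase_Vg V s v : sgood V s -> v \in V -> s v != v -> xbase V (Vg V v (s v)) s v.
Proof.
move=> sg Hv Hsv; split.
- by rewrite mem_Vg eqxx.
- by rewrite mem_Vg eqxx andbF.
- by rewrite eq_sym.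
- exact: perm_Vg.
Qed.

Lemma ext0 d V E s W E0 v ws : xbase V W s v -> size ws = d -> all (mem W) ws ->
  emeq E (E0 ++ new_edges s v ws) -> sym_ext d 0 W E0 s V E s.
Proof. by move=> [B1 B2 B3 B4] Hs Ha Em; exists v; split => //; exists ws. Qed.

Lemma ext1 d V E s W E0 v ws R : xbase V W s v -> size ws = d.+1 -> all (mem W) ws ->
  nrm (emap s (nth 0 ws 0, nth 0 ws 1)) != nrm (nth 0 ws 0, nth 0 ws 1) ->
  emeq E0 ((nth 0 ws 0, nth 0 ws 1) :: emap s (nth 0 ws 0, nth 0 ws 1) :: R) ->
  emeq E (R ++ new_edges s v ws) -> sym_ext d 1 W E0 s V E s.
Proof.
move=> [B1 B2 B3 B4] Hs Ha Hn Em0 Em; exists v; split => //; exists ws, R; split => //.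
- by rewrite (perm_mem Em0) /= mem_head.
- by rewrite /minus_pair (negbTE Hn).
Qed.

Lemma tgood_sub V s E T : sgood V s ->
  (forall e, e \in E -> [/\ e.1 \in V, e.2 \in V & e.1 != e.2]) ->
  (forall e, e \in E -> nrm (emap s e) != nrm e) ->
  (forall e, mult T e <= mult E e) -> emeq (map (emap s) T) T -> tgood V s T.
Proof.
move=> sg HE NF Hm Hsym; split => //.
- move=> f Hf; have /(leq_trans)/(_ (Hm _)) := mem_mult_pos Hf.
  case/mult_pos_mem => g Hg [] Eg; have [H1 H2 H12] := HE g Hg; rewrite Eg /= in H1 H2 H12.
    by split.
  by split => //; rewrite eq_sym.
- move=> f Hf; have /(leq_trans)/(_ (Hm _)) := mem_mult_pos Hf.
  case/mult_pos_mem => g Hg [] Eg; have := NF g Hg; rewrite Eg //.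
  by case: f Hf Eg => a b _ _; rewrite /emap /= (nrmC (s a)) (nrmC a).
Qed.

Lemma fixed_deg2 V s T x : sgood V s -> tgood V s T -> x \in V -> s x = x ->
  0 < count (inc x) T -> 1 < count (inc x) T.
Proof.
move=> sg tg Hx sx; rewrite -has_count => /hasP [g Hg ig].
have Eg := nrm_oth ig.
have Es : nrm (emap s g) = nrm (x, s (oth x g)).
  by move: (oth x g) (inc_oth ig) => o [] ->; rewrite /emap /= sx // nrmC.
have n := tg_nofix tg Hg; rewrite Es Eg in n.
have := @count_inc2 T x _ _ n; rewrite !inc_nrm /inc /= eqxx => /(_ isT isT).
have : 0 < mult T (nrm (x, s (oth x g))).
  have /emeqP <- := tg_sym tg; rewrite -Es /mult count_map -has_count.
  by apply/hasP; exists g => //; rewrite /= eqxx.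
have : 0 < mult T (nrm (x, oth x g)) by rewrite -Eg; exact: mem_mult_pos.
move: (mult T _) (mult T _) (count _ T) => p q r; lia.
Qed.

Lemma G2sym_of W s T1 T2 w0 : sgood W s -> w0 \in W -> tgood W s T1 -> tgood W s T2 ->
  spanning_tree W T1 -> spanning_tree W T2 -> G2sym (Sym2Tree W (T1 ++ T2) T1 T2 s).
Proof.
move=> sg Hw t1 t2 sp1 sp2.
case: (boolP (has (fun x => s x != x) W)) => [/hasP [x0 Hx0 Hs0]|Hn].
  left; split; last first.
    move=> e /=; rewrite mem_cat => /orP [He|He]; [exact (tg_nofix t1 He)|exact (tg_nofix t2 He)].
  split => //=; [|split| |exact (tg_sym t1)|exact (tg_sym t2)].
  - split => //=; last exact: perm_refl.
    split; first exact: sg_uniq sg.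
    move=> e; rewrite mem_cat => /orP [He|He]; [exact (tg_end t1 He)|exact (tg_end t2 He)].
  - exact (sg_in sg).
  - exact (sg_inv sg).
  - apply/emeqP => e; rewrite map_cat !mult_cat.
    by have /emeqP -> := tg_sym t1; have /emeqP -> := tg_sym t2.
  - by exists x0.
rewrite /G2sym; right.
have fix0 : forall x, x \in W -> s x = x.
  by move=> x Hx; move/hasPn: Hn => /(_ x Hx); rewrite negbK => /eqP.
have E0 : forall T, tgood W s T -> T = [::].
  case=> [|f T] // tg; exfalso.
  have [H1 H2 _] := tg_end tg (mem_head f T).
  have := tg_nofix tg (mem_head f T).
  by rewrite /emap (fix0 _ H1) (fix0 _ H2) -surjective_pairing eqxx.
have E1 := E0 _ t1; have E2 := E0 _ t2.
case: sp1 => _; rewrite E1 /= => Hsz.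
have [x EW] : exists x, W = [:: x].
  by move: Hsz Hw; case: (W) => [|x [|y W']] //= _ _; exists x.
exists x; rewrite /= ?E1 ?E2 EW; split => //.
by apply: fix0; rewrite EW mem_head.
Qed.

Lemma low_deg V s E T1 T2 x0 : sgood V s ->
  (forall e, e \in E -> [/\ e.1 \in V, e.2 \in V & e.1 != e.2]) ->
  tgood V s T1 -> tgood V s T2 -> spanning_tree V T1 -> spanning_tree V T2 ->
  emeq E (T1 ++ T2) -> x0 \in V -> s x0 != x0 ->
  exists2 v, v \in V & [/\ s v != v, 0 < count (inc v) T1, 0 < count (inc v) T2 &
                            count (inc v) T1 + count (inc v) T2 <= 3].
Proof.
move=> sg HE t1 t2 sp1 sp2 Em Hx0 Hs0.
have degE x : count (inc x) E = count (inc x) T1 + count (inc x) T2.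
  by rewrite (deg_emeq x Em) count_cat.
have pos : forall T, spanning_tree V T -> forall x, x \in V -> 0 < count (inc x) T.
  move=> T [Hc _] x Hx.
  case: (eqVneq x x0) => [Ex|Nx].
    apply: (reach_first (y := s x0)); first by apply: Hc => //; exact (sg_in sg Hx0).
    by rewrite Ex eq_sym.
  by apply: (reach_first (y := x0)); [apply: Hc|].
case: (boolP (has (fun x => (s x != x) && (count (inc x) E <= 3)) V)).
  move=> /hasP [v Hv /andP [H1 H2]]; exists v => //; split => //; try exact: pos.
  by rewrite -degE.
move=> Hn; exfalso.
have H4 : forall x, x \in V -> 4 <= count (inc x) E.
  move=> x Hx; rewrite degE.
  case: (eqVneq (s x) x) => [Ex|Nx].
    have := fixed_deg2 sg t1 Hx Ex (pos _ sp1 _ Hx).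
    have := fixed_deg2 sg t2 Hx Ex (pos _ sp2 _ Hx).
    move: (count _ T1) (count _ T2) => p q; lia.
  move/hasPn: Hn => /(_ x Hx); rewrite Nx /= -degE.
  move: (count _ E) => p; lia.
have := sumn_ge H4; rewrite deg_sum ?(sg_uniq sg) //.
rewrite (emeq_size Em) size_cat; case: sp1 => _ ->; case: sp2 => _ ->.
have : 0 < size V by case: (V) Hx0.
move: (size V) => n; lia.
Qed.

Theorem theorem5p6 (G' : sym2tree) :
  G2sym G' -> ~ is_K1 G' ->
  exists G : sym2tree,
    G2sym G /\ (sym_2tree_ext 0 G G' \/ sym_2tree_ext 1 G G').
Proof.
case=> [[[[mgE sp1 sp2 EmE] [ia1 ia2 ia3] [x0 Hx0 Hs0] S1 S2] NF]|K] NK; last by [].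
case: G' mgE sp1 sp2 EmE ia1 ia2 ia3 Hx0 Hs0 S1 S2 NF {NK}
  => V E T1 T2 s /= [uV HE] sp1 sp2 EmE ia1 ia2 ia3 Hx0 Hs0 S1 S2 NF.
have sg : sgood V s := SGood uV ia1 ia2.
have /emeqP mE := EmE.
have t1 : tgood V s T1.
  apply: tgood_sub sg HE NF _ S1 => e; rewrite mE mult_cat; exact: leq_addr.
have t2 : tgood V s T2.
  apply: tgood_sub sg HE NF _ S2 => e; rewrite mE mult_cat; exact: leq_addl.
have [v Hv [Hsv p1 p2 d3]] := low_deg sg HE t1 t2 sp1 sp2 EmE Hx0 Hs0.
have xb := xbase_Vg sg Hv Hsv.
have sg' := sgood_Vg sg Hv Hsv.
have : (count (inc v) T1 = 1 /\ count (inc v) T2 = 1) \/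
       (count (inc v) T1 = 2 /\ count (inc v) T2 = 1) \/
       (count (inc v) T1 = 1 /\ count (inc v) T2 = 2).
  move: (count (inc v) T1) (count (inc v) T2) p1 p2 d3 => p q; lia.
case=> [[D1 D2]|[[D1 D2]|[D1 D2]]].
- have [a [Ha ta spa Ema]] := tree_red1 sg t1 sp1 Hv Hsv D1.
  have [c [Hc tc spc Emc]] := tree_red1 sg t2 sp2 Hv Hsv D2.
  have /emeqP mA := Ema; have /emeqP mC := Emc.
  exists (Sym2Tree (Vg V v (s v)) (rmv v (s v) T1 ++ rmv v (s v) T2) (rmv v (s v) T1) (rmv v (s v) T2) s); split; first exact: (G2sym_of sg' Ha ta tc spa spc).
  left; split.
  + apply: (ext0 (v := v) (ws := [:: a; c])) => //=; first by rewrite Ha Hc.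
    apply/emeqP => e; rewrite mE !mult_cat mA mC !mult_cat.
    rewrite ?mult_nil; lia.
  + exists 0, 0; split => //.
    * by apply: (ext0 (v := v) (ws := [:: a])) => //=; rewrite Ha.
    * by apply: (ext0 (v := v) (ws := [:: c])) => //=; rewrite Hc.
- have [a [b [Ha Hb Hn [ta spa] Ema]]] := tree_red2 sg t1 sp1 Hv Hsv D1.
  have [c [Hc tc spc Emc]] := tree_red1 sg t2 sp2 Hv Hsv D2.
  have /emeqP mA := Ema; have /emeqP mC := Emc.
  exists (Sym2Tree (Vg V v (s v)) (((a, b) :: (s a, s b) :: rmv v (s v) T1) ++ rmv v (s v) T2) ((a, b) :: (s a, s b) :: rmv v (s v) T1) (rmv v (s v) T2) s); split; first exact: (G2sym_of sg' Ha ta tc spa spc).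
  right; split.
  + apply: (ext1 (v := v) (ws := [:: a; b; c]) (R := rmv v (s v) T1 ++ rmv v (s v) T2)) => //=.
    * by rewrite Ha Hb Hc.
    * exact: perm_refl.
    apply/emeqP => e; rewrite mE !mult_cat mA mC !mult_cat.
    rewrite ?mult_nil; lia.
  + exists 1, 0; split => //.
    * apply: (ext1 (v := v) (ws := [:: a; b]) (R := rmv v (s v) T1)) => //=.
      - by rewrite Ha Hb.
      - exact: perm_refl.
    * by apply: (ext0 (v := v) (ws := [:: c])) => //=; rewrite Hc.
- have [c [Hc tc spc Emc]] := tree_red1 sg t1 sp1 Hv Hsv D1.
  have [a [b [Ha Hb Hn [ta spa] Ema]]] := tree_red2 sg t2 sp2 Hv Hsv D2.
  have /emeqP mA := Ema; have /emeqP mC := Emc.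
  exists (Sym2Tree (Vg V v (s v)) (rmv v (s v) T1 ++ ((a, b) :: (s a, s b) :: rmv v (s v) T2)) (rmv v (s v) T1) ((a, b) :: (s a, s b) :: rmv v (s v) T2) s); split; first exact: (G2sym_of sg' Ha tc ta spc spa).
  right; split.
  + apply: (ext1 (v := v) (ws := [:: a; b; c]) (R := rmv v (s v) T1 ++ rmv v (s v) T2)) => //=.
    * by rewrite Ha Hb Hc.
    * apply/emeqP => e; rewrite !mult_cat !mult_cons mult_cat (_ : emap s (a,b) = (s a, s b)) //; genb; lia.
    apply/emeqP => e; rewrite mE !mult_cat mA mC !mult_cat.
    rewrite ?mult_nil; lia.
  + exists 0, 1; split => //.
    * by apply: (ext0 (v := v) (ws := [:: c])) => //=; rewrite Hc.
    * apply: (ext1 (v := v) (ws := [:: a; b]) (R := rmv v (s v) T2)) => //=.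
      - by rewrite Ha Hb.
      - exact: perm_refl.
Qed.
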